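(* Let $\delta:G_0\to G_1$ be an open continuous homomorphism of profinite groups with finite kernel. Let $H$ be a closed subgroup of $G_1$ and $\rho:H\to G_0$ a continuous homomorphism with $\delta\circ\rho$ equal to the inclusion $H\hookrightarrow G_1$. Then there exist an open subgroup $U\subset G_1$ containing $H$ and a continuous homomorphism $\rho':U\to G_0$ such that $\rho'|_H=\rho$ and $\delta\circ\rho'$ is the inclusion $U\hookrightarrow G_1$. *)

(* Defs.v *)
From Stdlib Require Import List.

Set Implicit Arguments.

Record TopGroup := {
  tg_car :> Type;
  tg_mul : tg_car -> tg_car -> tg_car;
  tg_one : tg_car;
  tg_inv : tg_car -> tg_car;
  tg_open : (tg_car -> Prop) -> Prop;
  tg_mulA : forall x y z, tg_mul x (tg_mul y z) = tg_mul (tg_mul x y) z;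
  tg_mul1g : forall x, tg_mul tg_one x = x;
  tg_mulVg : forall x, tg_mul (tg_inv x) x = tg_one;
  tg_open_full : tg_open (fun _ => True);
  tg_open_union : forall F : (tg_car -> Prop) -> Prop,
      (forall U, F U -> tg_open U) -> tg_open (fun x => exists U, F U /\ U x);
  tg_open_inter : forall U V, tg_open U -> tg_open V ->
      tg_open (fun x => U x /\ V x);
  tg_mul_cont : forall W x y, tg_open W -> W (tg_mul x y) ->
      exists U V, tg_open U /\ tg_open V /\ U x /\ V y /\
        (forall a b, U a -> V b -> W (tg_mul a b));
  tg_inv_cont : forall W, tg_open W -> tg_open (fun x => W (tg_inv x))
}.

Arguments tg_mul {t}.
Arguments tg_one {t}.
Arguments tg_inv {t}.
Arguments tg_open {t}.

Definition compact (G : TopGroup) : Prop :=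
  forall F : (G -> Prop) -> Prop,
    (forall U, F U -> tg_open U) ->
    (forall x : G, exists U, F U /\ U x) ->
    exists l : list (G -> Prop),
      (forall U, In U l -> F U) /\ (forall x : G, exists U, In U l /\ U x).

Definition hausdorff (G : TopGroup) : Prop :=
  forall x y : G, x <> y ->
    exists U V, tg_open U /\ tg_open V /\ U x /\ V y /\
      (forall z, U z -> V z -> False).

Definition connected_subset {G : TopGroup} (S : G -> Prop) : Prop :=
  ~ exists U V, tg_open U /\ tg_open V /\
      (forall x, S x -> U x \/ V x) /\
      (exists x, S x /\ U x) /\ (exists x, S x /\ V x) /\
      (forall x, S x -> U x -> V x -> False).

Definition totally_disconnected (G : TopGroup) : Prop :=
  forall S : G -> Prop, connected_subset S ->
    forall x y, S x -> S y -> x = y.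

Definition profinite (G : TopGroup) : Prop :=
  compact G /\ hausdorff G /\ totally_disconnected G.

Definition subgroup {G : TopGroup} (H : G -> Prop) : Prop :=
  H tg_one /\ (forall x y, H x -> H y -> H (tg_mul x y)) /\
  (forall x, H x -> H (tg_inv x)).

Definition closed_subgroup {G : TopGroup} (H : G -> Prop) : Prop :=
  subgroup H /\ tg_open (fun x => ~ H x).

Definition open_subgroup {G : TopGroup} (H : G -> Prop) : Prop :=
  subgroup H /\ tg_open H.

Definition continuous {G K : TopGroup} (f : G -> K) : Prop :=
  forall W, tg_open W -> tg_open (fun x => W (f x)).

Definition open_map {G K : TopGroup} (f : G -> K) : Prop :=
  forall U, tg_open U -> tg_open (fun y => exists x, U x /\ f x = y).

Definition homomorphism {G K : TopGroup} (f : G -> K) : Prop :=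
  forall x y, f (tg_mul x y) = tg_mul (f x) (f y).

Definition finite_kernel {G K : TopGroup} (f : G -> K) : Prop :=
  exists l : list G, forall x, f x = tg_one -> In x l.

(* A map H -> K defined on a subgroup H of G, represented by a total function
   f : G -> K of which only the values on H matter.  It is a continuous
   homomorphism for the subspace topology on H. *)
Definition hom_on {G K : TopGroup} (H : G -> Prop) (f : G -> K) : Prop :=
  forall x y, H x -> H y -> f (tg_mul x y) = tg_mul (f x) (f y).

Definition continuous_on {G K : TopGroup} (H : G -> Prop) (f : G -> K) : Prop :=
  forall W, tg_open W ->
    exists O, tg_open O /\ (forall x, H x -> (W (f x) <-> O x)).

(* Main.v *)
Require Import Defs.
From Stdlib Require Import List.
From Stdlib Require Import Classical FunctionalExtensionality PropExtensionality ClassicalEpsilon.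

Section Grp.
Variable G : TopGroup.
Local Notation "x ** y" := (@tg_mul G x y) (at level 40, left associativity).
Local Notation one := (@tg_one G).
Local Notation inv := (@tg_inv G).
Local Notation opn := (@tg_open G).

Lemma mulA (x y z : G) : x ** (y ** z) = x ** y ** z.
Proof. apply tg_mulA. Qed.
Lemma mul1g (x : G) : one ** x = x.
Proof. apply tg_mul1g. Qed.
Lemma mulVg (x : G) : inv x ** x = one.
Proof. apply tg_mulVg. Qed.

Lemma mulgV (x : G) : x ** inv x = one.
Proof.
  transitivity ((inv (inv x) ** inv x) ** (x ** inv x)).
  { rewrite mulVg, mul1g. reflexivity. }
  rewrite <- mulA, (mulA (inv x) x), mulVg, mul1g, mulVg. reflexivity.
Qed.
Lemma mulg1 (x : G) : x ** one = x.
Proof. rewrite <- (mulVg x), mulA, mulgV, mul1g. reflexivity. Qed.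
Lemma mulKg (x y : G) : inv x ** (x ** y) = y.
Proof. rewrite mulA, mulVg, mul1g. reflexivity. Qed.
Lemma mulKVg (x y : G) : x ** (inv x ** y) = y.
Proof. rewrite mulA, mulgV, mul1g. reflexivity. Qed.
Lemma mulg_cancel (x y z : G) : x ** y = x ** z -> y = z.
Proof. intro E. rewrite <- (mulKg x y), E, mulKg. reflexivity. Qed.
Lemma inv_uniq (x y : G) : x ** y = one -> y = inv x.
Proof. intro E. apply (mulg_cancel x). rewrite E, mulgV. reflexivity. Qed.
Lemma invgK (x : G) : inv (inv x) = x.
Proof. symmetry. apply inv_uniq. apply mulVg. Qed.
Lemma invg_mul (x y : G) : inv (x ** y) = inv y ** inv x.
Proof. symmetry. apply inv_uniq. rewrite <- mulA, (mulA y), mulgV, mul1g, mulgV. reflexivity. Qed.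
Lemma inv1 : inv one = one.
Proof. symmetry. apply inv_uniq. apply mul1g. Qed.

End Grp.

Global Hint Rewrite invg_mul invgK mulKg mulKVg mulVg mulgV mul1g mulg1 inv1 : grp.
Global Hint Rewrite <- mulA : grp.
Ltac grp := autorewrite with grp; try reflexivity.

Section Top.
Variable G : TopGroup.
Local Notation "x ** y" := (@tg_mul G x y) (at level 40, left associativity).
Local Notation one := (@tg_one G).
Local Notation inv := (@tg_inv G).
Local Notation opn := (@tg_open G).

Lemma open_ext (P Q : G -> Prop) : (forall x, P x <-> Q x) -> opn P -> opn Q.
Proof.
  intros E H. replace Q with P; auto.
  apply functional_extensionality; intro x; apply propositional_extensionality; auto.
Qed.

Lemma open_unionP (Q : (G -> Prop) -> Prop) :
  opn (fun y => exists U, opn U /\ Q U /\ U y).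
Proof.
  eapply open_ext; [| apply (tg_open_union G (fun U => opn U /\ Q U)); tauto].
  intro x; split; intros [U HU]; exists U; tauto.
Qed.

Lemma open_local (P : G -> Prop) :
  (forall x, P x -> exists U, opn U /\ U x /\ forall y, U y -> P y) -> opn P.
Proof.
  intro H. eapply open_ext; [| apply (open_unionP (fun U => forall y, U y -> P y))].
  intro x; split.
  - intros [U [? [? ?]]]; eauto.
  - intro Px. destruct (H x Px) as [U [? [? ?]]]. exists U; auto.
Qed.

Lemma open_full : opn (fun _ => True).
Proof. apply tg_open_full. Qed.

Lemma open_and (U V : G -> Prop) : opn U -> opn V -> opn (fun x => U x /\ V x).
Proof. apply tg_open_inter. Qed.

Lemma open_or (U V : G -> Prop) : opn U -> opn V -> opn (fun x => U x \/ V x).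
Proof.
  intros HU HV. apply open_local. intros x [Ux|Vx].
  - exists U; auto.
  - exists V; auto.
Qed.

Lemma open_inter_cond (A : Type) (l : list A) (P : A -> Prop) (f : A -> G -> Prop) :
  (forall a, In a l -> P a -> opn (f a)) ->
  opn (fun x => forall a, In a l -> P a -> f a x).
Proof.
  induction l as [|a l IH]; intro H.
  - eapply open_ext; [| apply open_full]. simpl; tauto.
  - assert (Hl : opn (fun x => forall b, In b l -> P b -> f b x)).
    { apply IH. intros b Hb. apply H. simpl; auto. }
    destruct (classic (P a)) as [Pa|nPa].
    + eapply open_ext; [| apply (open_and _ _ (H a (or_introl eq_refl) Pa) Hl)].
      intro x; simpl; split.
      * intros [? ?] b [<-|Hb]; auto.
      * intro Hx; split; auto.
    + eapply open_ext; [| apply Hl].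
      intro x; simpl; split.
      * intros Hx b [<-|Hb]; auto. contradiction.
      * intros Hx b Hb; auto.
Qed.

Lemma open_transl (U : G -> Prop) (a : G) : opn U -> opn (fun y => U (a ** y)).
Proof.
  intro HU. apply open_local. intros y Hy.
  destruct (tg_mul_cont G U a y HU Hy) as [A [B [_ [HB [Aa [By HAB]]]]]].
  exists B; split; [|split]; auto.
Qed.

Lemma open_transr (U : G -> Prop) (a : G) : opn U -> opn (fun y => U (y ** a)).
Proof.
  intro HU. apply open_local. intros y Hy.
  destruct (tg_mul_cont G U y a HU Hy) as [A [B [HA [_ [Ay [Ba HAB]]]]]].
  exists A; split; [|split]; auto.
Qed.

Definition clopen (C : G -> Prop) := opn C /\ opn (fun y => ~ C y).

Lemma compact_closed (C : G -> Prop) : compact G -> opn (fun y => ~ C y) ->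
  forall F : (G -> Prop) -> Prop, (forall U, F U -> opn U) ->
  (forall x, C x -> exists U, F U /\ U x) ->
  exists l : list (G -> Prop), forall x, C x -> exists U, In U l /\ F U /\ U x.
Proof.
  intros cG hC F HF Hcov.
  destruct (cG (fun U => F U \/ U = (fun y => ~ C y))) as [l [H1 H2]].
  - intros U [?| ->]; auto.
  - intro x. destruct (classic (C x)) as [Cx|nCx].
    + destruct (Hcov x Cx) as [U [? ?]]; eauto.
    + exists (fun y => ~ C y); auto.
  - exists l. intros x Cx. destruct (H2 x) as [U [HU Ux]].
    destruct (H1 U HU) as [FU| ->]; [eauto | contradiction].
Qed.

Lemma compact_all : compact G ->
  forall F : (G -> Prop) -> Prop, (forall U, F U -> opn U) ->
  (forall x, exists U, F U /\ U x) ->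
  exists l : list (G -> Prop), forall x, exists U, In U l /\ F U /\ U x.
Proof.
  intros cG F HF Hc.
  destruct (compact_closed (fun _ => True) cG) with (F := F) as [l Hl]; auto.
  - eapply open_ext; [| apply (tg_open_union G (fun _ => False))]; [|tauto].
    intro x; split; [intros [U [[] _]] | tauto].
  - exists l; auto.
Qed.

Lemma sep_point (B : G -> Prop) (a : G) : compact G -> hausdorff G ->
  opn (fun y => ~ B y) -> ~ B a ->
  exists U V, opn U /\ opn V /\ U a /\ (forall b, B b -> V b) /\
    (forall z, U z -> V z -> False).
Proof.
  intros cG hG hB nBa.
  set (F := fun W => opn W /\ exists U, opn U /\ U a /\ (forall z, U z -> W z -> False)).
  destruct (compact_closed B cG hB F) as [l Hl].
  - intros U [? _]; auto.
  - intros b Bb. assert (a <> b) by (intro; subst; contradiction).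
    destruct (hG a b H) as [U [V [? [? [? [? ?]]]]]].
    exists V; split; auto. split; auto. exists U; auto.
  - exists (fun y => forall W, In W l -> F W -> exists U, opn U /\ U a /\
                (forall z, U z -> W z -> False) /\ U y).
    exists (fun y => exists W, In W l /\ F W /\ W y).
    split; [|split; [|split; [|split]]].
    + apply open_inter_cond. intros W _ _.
      eapply open_ext; [| apply (open_unionP (fun U => U a /\ (forall z, U z -> W z -> False)))].
      intro y; split; intros [U HU]; exists U; tauto.
    + apply open_local. intros y [W [? [[HW ?] ?]]]. exists W. split; [auto|split; auto].
      intros z Wz. exists W; split; [auto|split]; [split; auto|auto].
    + intros W _ [_ [U [? [? ?]]]]. exists U; auto.
    + intros b Bb. destruct (Hl b Bb) as [W [? [? ?]]]. eauto.
    + intros z HU [W [HW [FW Wz]]]. destruct (HU W HW FW) as [U [_ [_ [HUW Uz]]]]. eauto.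
Qed.

Lemma sep_sets (A B : G -> Prop) : compact G -> hausdorff G ->
  opn (fun y => ~ A y) -> opn (fun y => ~ B y) -> (forall x, A x -> B x -> False) ->
  exists U V, opn U /\ opn V /\ (forall a, A a -> U a) /\ (forall b, B b -> V b) /\
    (forall z, U z -> V z -> False).
Proof.
  intros cG hG hA hB dAB.
  set (F := fun W => opn W /\ exists V, opn V /\ (forall b, B b -> V b) /\
                       (forall z, W z -> V z -> False)).
  destruct (compact_closed A cG hA F) as [l Hl].
  - intros U [? _]; auto.
  - intros a Aa. destruct (sep_point B a cG hG hB) as [U [V [? [? [? [? ?]]]]]].
    + intro Ba. eauto.
    + exists U; split; auto. split; auto. exists V; auto.
  - exists (fun y => exists W, In W l /\ F W /\ W y).
    exists (fun y => forall W, In W l -> F W -> exists V, opn V /\ (forall b, B b -> V b) /\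
                (forall z, W z -> V z -> False) /\ V y).
    split; [|split; [|split; [|split]]].
    + apply open_local. intros y [W [? [[HW ?] ?]]]. exists W. split; [auto|split; auto].
      intros z Wz. exists W; split; [auto|split]; [split; auto|auto].
    + apply open_inter_cond. intros W _ _.
      eapply open_ext; [| apply (open_unionP (fun V => (forall b, B b -> V b) /\ (forall z, W z -> V z -> False)))].
      intro y; split; intros [U HU]; exists U; tauto.
    + intros a Aa. destruct (Hl a Aa) as [W [? [? ?]]]. eauto.
    + intros b Bb W _ [_ [V [? [? ?]]]]. exists V; auto.
    + intros z [W [HW [FW Wz]]] HV. destruct (HV W HW FW) as [V [_ [_ [HWV Vz]]]]. eauto.
Qed.

End Top.

Section Clopen.
Variable G : TopGroup.
Local Notation opn := (@tg_open G).

Definition Fc (x : G) (W : G -> Prop) :=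
  exists C, clopen G C /\ C x /\ W = (fun y => ~ C y).

Definition Cstar (x : G) (l : list (G -> Prop)) (y : G) :=
  forall W, In W l -> Fc x W -> ~ W y.

Lemma Cstar_clopen x l : clopen G (Cstar x l) /\ Cstar x l x.
Proof.
  split; [split|].
  - apply open_inter_cond. intros W _ [C [[HC _] [_ ->]]].
    eapply open_ext; [| apply HC]. intro y; simpl; split; [tauto|apply NNPP].
  - apply open_local. intros y Hy. unfold Cstar in Hy.
    apply not_all_ex_not in Hy. destruct Hy as [W Hy].
    apply imply_to_and in Hy; destruct Hy as [HW Hy].
    apply imply_to_and in Hy; destruct Hy as [FW Wy]. apply NNPP in Wy.
    destruct FW as [C [HCl [Cx EW]]].
    exists W. split; [subst W; apply HCl|split; auto].
    intros z Wz Hz. apply (Hz W HW); auto. exists C; auto.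
  - intros W _ [C [_ [Cx ->]]]. tauto.
Qed.

Lemma clopen_basis : compact G -> hausdorff G -> totally_disconnected G ->
  forall (P : G -> Prop) x, opn P -> P x ->
  exists C, clopen G C /\ C x /\ forall y, C y -> P y.
Proof.
  intros cG hG tG P x HP Px.
  set (Q := fun y => forall C, clopen G C -> C x -> C y).
  assert (notQ : forall y, ~ Q y -> exists C, clopen G C /\ C x /\ ~ C y).
  { intros y nQ. unfold Q in nQ. apply not_all_ex_not in nQ. destruct nQ as [C nQ].
    exists C. tauto. }
  assert (oQ : opn (fun y => ~ Q y)).
  { apply open_local. intros y nQ. destruct (notQ y nQ) as [C [HCl [Cx nCy]]].
    exists (fun y => ~ C y). split; [apply HCl|]. split; auto. intros z nCz Qz. apply nCz, Qz; auto. }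
  assert (conQ : connected_subset Q).
  { intros [U [V [HU [HV [cov [[a [Qa Ua]] [[b [Qb Vb]] disj]]]]]]].
    set (A := fun y => Q y /\ ~ V y). set (B := fun y => Q y /\ ~ U y).
    destruct (sep_sets G A B cG hG) as [U' [V' [HU' [HV' [AU' [BV' dU'V']]]]]].
    - eapply open_ext; [| apply (open_or G _ _ oQ HV)]. intro y; unfold A.
      split; [intros [?|?]; tauto | intro H; apply not_and_or in H; destruct H as [H|H]; [auto|right; now apply NNPP]].
    - eapply open_ext; [| apply (open_or G _ _ oQ HU)]. intro y; unfold B.
      split; [intros [?|?]; tauto | intro H; apply not_and_or in H; destruct H as [H|H]; [auto|right; now apply NNPP]].
    - unfold A, B. intros y [Qy nV] [_ nU]. destruct (cov y Qy); auto.
    - set (F := fun W => W = U' \/ W = V' \/ Fc x W).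
      destruct (compact_all G cG F) as [l Hl].
      + intros W [->|[->|[C [[_ HC] [_ ->]]]]]; auto.
      + intro y. destruct (classic (Q y)) as [Qy|nQy].
        * destruct (cov y Qy) as [Uy|Vy].
          -- assert (~ V y) by (intro; eapply disj; eauto).
             exists U'. split; [left; auto | apply AU'; split; auto].
          -- assert (~ U y) by (intro; eapply disj; eauto).
             exists V'. split; [right; left; auto | apply BV'; split; auto].
        * destruct (notQ y nQy) as [C [HC [Cx nCy]]].
          exists (fun y => ~ C y). split; auto. right; right. exists C; auto.
      + destruct (Cstar_clopen x l) as [[oC cC] Cx].
        assert (CUV : forall y, Cstar x l y -> U' y \/ V' y).
        { intros y Cy. destruct (Hl y) as [W [HW [FW Wy]]].
          destruct FW as [->|[->|FW]]; auto. exfalso; exact (Cy W HW FW Wy). }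
        assert (gen : forall X Y : G -> Prop, opn X -> opn Y -> (forall z, X z -> Y z -> False) ->
                  (forall y, Cstar x l y -> X y \/ Y y) -> clopen G (fun y => Cstar x l y /\ X y)).
        { intros X Y HX HY dXY cXY. split; [apply open_and; auto|].
          eapply open_ext; [| apply (open_or G _ _ cC HY)]. intro y. split.
          - intros [H|H] [H1 H2]; [tauto| eauto].
          - intro H. destruct (classic (Cstar x l y)) as [Cy|nCy]; [|auto].
            right. destruct (cXY y Cy); tauto. }
        destruct (CUV x Cx) as [U'x|V'x].
        * assert (HD := gen U' V' HU' HV' dU'V' CUV).
          assert (Db := Qb _ HD (conj Cx U'x)). destruct Db as [_ U'b].
          apply (dU'V' b U'b). apply BV'. split; auto. intro Ub; exact (disj b Qb Ub Vb).
        * assert (HD := gen V' U' HV' HU' (fun z a b => dU'V' z b a)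
            (fun y Cy => match CUV y Cy with or_introl h => or_intror h | or_intror h => or_introl h end)).
          assert (Da := Qa _ HD (conj Cx V'x)). destruct Da as [_ V'a].
          apply (dU'V' a); auto. apply AU'. split; auto. intro Va; exact (disj a Qa Ua Va). }
  assert (Qx : forall y, Q y -> y = x).
  { intros y Qy. symmetry. apply (tG Q conQ); auto. unfold Q; auto. }
  set (F := fun W => W = P \/ Fc x W).
  destruct (compact_all G cG F) as [l Hl].
  - intros W [->|[C [[_ HC] [_ ->]]]]; auto.
  - intro y. destruct (classic (P y)) as [Py|nPy].
    + exists P; split; [left|]; auto.
    + assert (nQy : ~ Q y) by (intro Qy; apply nPy; rewrite (Qx y Qy); auto).
      destruct (notQ y nQy) as [C [HC [Cx nCy]]].
      exists (fun y => ~ C y). split; auto. right. exists C; auto.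
  - destruct (Cstar_clopen x l) as [HC Cx].
    exists (Cstar x l). split; [auto|split; auto].
    intros y Cy. destruct (Hl y) as [W [HW [[->|FW] Wy]]]; auto.
    exfalso; exact (Cy W HW FW Wy).
Qed.
End Clopen.

Section OpenSub.
Variable G : TopGroup.
Local Notation "x ** y" := (@tg_mul G x y) (at level 40, left associativity).
Local Notation one := (@tg_one G).
Local Notation inv := (@tg_inv G).
Local Notation opn := (@tg_open G).

Inductive gen (N : G -> Prop) : G -> Prop :=
| gen1 : gen N one
| genM x n : gen N x -> N n -> gen N (x ** n).

Lemma gen_mul N x y : gen N x -> gen N y -> gen N (x ** y).
Proof.
  intros Hx Hy. induction Hy as [|y n Hy IH Hn].
  - rewrite mulg1; auto.
  - rewrite mulA. apply genM; auto.
Qed.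

Lemma gen_inv N x : (forall n, N n -> N (inv n)) -> gen N x -> gen N (inv x).
Proof.
  intros Ns Hx. induction Hx as [|x n Hx IH Hn].
  - rewrite inv1. apply gen1.
  - rewrite invg_mul. apply gen_mul; auto.
    rewrite <- (mul1g _ (inv n)). apply genM; [apply gen1|auto].
Qed.

Lemma open_subgroup_in_clopen (C : G -> Prop) : compact G -> clopen G C -> C one ->
  exists S, open_subgroup S /\ forall y, S y -> C y.
Proof.
  intros cG [oC cC] C1.
  set (F := fun U => opn U /\ exists N, opn N /\ N one /\ (forall a b, U a -> N b -> C (a ** b))).
  destruct (compact_closed G C cG cC F) as [l Hl].
  - intros U [? _]; auto.
  - intros v Cv. rewrite <- (mulg1 _ v) in Cv.
    destruct (tg_mul_cont G C v one oC Cv) as [A [B [? [? [? [? ?]]]]]].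
    exists A. split; auto. split; auto. exists B; auto.
  - set (N0 := fun y => forall U, In U l -> F U -> exists N, opn N /\ N one /\
                  (forall a b, U a -> N b -> C (a ** b)) /\ N y).
    assert (oN0 : opn N0).
    { apply open_inter_cond. intros U _ _.
      eapply open_ext; [| apply (open_unionP G (fun N => N one /\ (forall a b, U a -> N b -> C (a ** b))))].
      intro y; split; intros [N HN]; exists N; tauto. }
    assert (N01 : N0 one).
    { intros U _ [_ [N [? [? ?]]]]. exists N; auto. }
    assert (CN0 : forall v n, C v -> N0 n -> C (v ** n)).
    { intros v n Cv Nn. destruct (Hl v Cv) as [U [HU [FU Uv]]].
      destruct (Nn U HU FU) as [N [_ [_ [HN Nn']]]]. eauto. }
    set (N1 := fun y => N0 y /\ N0 (inv y)).
    assert (oN1 : opn N1) by (apply open_and; [|apply tg_inv_cont]; auto).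
    assert (N1s : forall n, N1 n -> N1 (inv n)).
    { intros n [? ?]. split; auto. rewrite invgK; auto. }
    exists (gen N1). split; [split; [split; [|split]|]|].
    + apply gen1.
    + intros; apply gen_mul; auto.
    + intros x Hx; apply gen_inv; auto.
    + apply open_local. intros x Hx.
      exists (fun y => N1 (inv x ** y)). split; [apply open_transl; auto|split].
      * rewrite mulVg. split; [|rewrite inv1]; auto.
      * intros y Hy. rewrite <- (mulKVg _ x y). apply genM; auto.
    + intros y Hy. induction Hy as [|x n Hx IH [Hn _]]; auto.
Qed.

Lemma normal_core (S : G -> Prop) : compact G -> open_subgroup S ->
  exists N, open_subgroup N /\ (forall g x, N x -> N (inv g ** x ** g)) /\
    forall y, N y -> S y.
Proof.
  intros cG [[S1 [SM SV]] oS].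
  assert (Sconj : forall s x, S s -> S x -> S (inv s ** x ** s)).
  { intros s x Ss Sx. apply SM; [apply SM|]; auto. }
  set (F := fun W => exists g, W = fun y => S (inv g ** y)).
  destruct (compact_all G cG F) as [l Hl].
  - intros W [g ->]. apply open_transl; auto.
  - intro y. exists (fun z => S (inv y ** z)). split; [exists y; auto|]. rewrite mulVg; auto.
  - set (N := fun x => forall g, S (inv g ** x ** g)).
    exists N. split; [split; [split; [|split]|]|split].
    + intro g. unfold N. grp. auto.
    + intros x y Hx Hy g. replace (inv g ** (x ** y) ** g) with
        ((inv g ** x ** g) ** (inv g ** y ** g)) by grp. apply SM; auto.
    + intros x Hx g. replace (inv g ** inv x ** g) with (inv (inv g ** x ** g)) by grp.
      apply SV; auto.
    + apply open_local. intros x Nx.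
      exists (fun y => forall W, In W l -> F W -> exists g, W = (fun z => S (inv g ** z)) /\
                 S (inv g ** y ** g)).
      split; [|split].
      * apply open_inter_cond. intros W _ _. apply open_local.
        intros y [g [EW Sy]]. exists (fun y => S (inv g ** y ** g)). split.
        -- apply (open_transl G (fun w => S (w ** g))). apply open_transr; auto.
        -- split; auto. intros z Hz; exists g; auto.
      * intros W _ [g EW]. exists g; auto.
      * intros y Hy g. destruct (Hl g) as [W [HW [FW Wg]]].
        destruct (Hy W HW FW) as [g1 [EW Sy]]. rewrite EW in Wg.
        replace (inv g ** y ** g) with
          (inv (inv g1 ** g) ** (inv g1 ** y ** g1) ** (inv g1 ** g)) by grp.
        apply Sconj; auto.
    + intros h x Nx g. replace (inv g ** (inv h ** x ** h) ** g) with
        (inv (h ** g) ** x ** (h ** g)) by grp. apply Nx.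
    + intros y Ny. specialize (Ny one). revert Ny. grp. auto.
Qed.

Lemma small_normal : profinite G -> forall P : G -> Prop, opn P -> P one ->
  exists N, open_subgroup N /\ (forall g x, N x -> N (inv g ** x ** g)) /\
    forall y, N y -> P y.
Proof.
  intros [cG [hG tG]] P oP P1.
  destruct (clopen_basis G cG hG tG P one oP P1) as [C [HC [C1 CP]]].
  destruct (open_subgroup_in_clopen C cG HC C1) as [S [HS SC]].
  destruct (normal_core S cG HS) as [N [HN [Nn NS]]].
  exists N; split; [|split]; auto.
Qed.

End OpenSub.

Notation "x ** y" := (tg_mul x y) (at level 40, left associativity).

Lemma idem_one (G : TopGroup) (x : G) : x = x ** x -> x = tg_one.
Proof. intro E. symmetry. apply (mulg_cancel G x). rewrite mulg1. auto. Qed.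

Lemma hom_one (G K : TopGroup) (f : G -> K) : homomorphism f -> f tg_one = tg_one.
Proof. intro hf. apply idem_one. rewrite <- hf, mul1g. auto. Qed.

Lemma hom_inv (G K : TopGroup) (f : G -> K) : homomorphism f ->
  forall x, f (tg_inv x) = tg_inv (f x).
Proof. intros hf x. apply inv_uniq. rewrite <- hf, mulgV. apply hom_one; auto. Qed.

Theorem lemma4p3 (G0 G1 : TopGroup) (pG0 : profinite G0) (pG1 : profinite G1)
  (delta : G0 -> G1)
  (hdelta : homomorphism delta) (cdelta : continuous delta)
  (odelta : open_map delta) (kdelta : finite_kernel delta)
  (H : G1 -> Prop) (hH : closed_subgroup H)
  (rho : G1 -> G0) (hrho : hom_on H rho) (crho : continuous_on H rho)
  (sec : forall h, H h -> delta (rho h) = h) :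
  exists U : G1 -> Prop, open_subgroup U /\ (forall h, H h -> U h) /\
    exists rho' : G1 -> G0, hom_on U rho' /\ continuous_on U rho' /\
      (forall h, H h -> rho' h = rho h) /\
      (forall u, U u -> delta (rho' u) = u).
Proof.
  destruct kdelta as [kl Hkl].
  destruct hH as [[H1 [HM HV]] _].
  assert (d1 : delta tg_one = tg_one) by (apply hom_one; auto).
  assert (dinv := hom_inv _ _ _ hdelta).
  assert (r1 : rho tg_one = tg_one).
  { apply idem_one. rewrite <- hrho, mul1g; auto. }
  assert (rinv : forall h, H h -> rho (tg_inv h) = tg_inv (rho h)).
  { intros h Hh. apply inv_uniq. rewrite <- hrho, mulgV; auto. }
  set (P := fun y : G0 => forall k, In k kl -> True -> exists U, tg_open U /\ U tg_one /\
              (k = tg_one \/ ~ U k) /\ U y).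
  assert (oP : tg_open P).
  { apply open_inter_cond. intros k _ _.
    eapply open_ext; [| apply (open_unionP G0 (fun U => U tg_one /\ (k = tg_one \/ ~ U k)))].
    intro y; split; intros [U HU]; exists U; tauto. }
  assert (P1 : P tg_one).
  { intros k _ _. destruct (classic (k = tg_one)) as [E|nE].
    - exists (fun _ => True). split; [apply open_full|tauto].
    - destruct (proj1 (proj2 pG0) tg_one k (fun e => nE (eq_sym e))) as [U [V [? [? [? [? dUV]]]]]].
      exists U. split; [auto|split; [auto|split; [right; intro; eauto|auto]]]. }
  destruct (small_normal G0 pG0 P oP P1) as [N [[[N1 [NM NV]] oN] [Nn NP]]].
  assert (Kinj : forall n, N n -> delta n = tg_one -> n = tg_one).
  { intros n Hn dn. destruct (NP n Hn n (Hkl n dn) I) as [U [_ [_ [[?|nU] Un]]]]; tauto. }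
  destruct (crho N oN) as [O [oO HO]].
  set (P2 := fun x => N x /\ O (delta x)).
  assert (oP2 : tg_open P2) by (apply open_and; [|apply cdelta]; auto).
  assert (P21 : P2 tg_one).
  { split; auto. rewrite d1. apply HO; auto. rewrite r1; auto. }
  destruct (small_normal G0 pG0 P2 oP2 P21) as [N' [[[N'1 [N'M N'V]] oN'] [N'n N'P]]].
  set (W := fun x => exists h, H h /\ exists n, N' n /\ x = rho h ** n).
  assert (W1 : W tg_one) by (exists tg_one; split; auto; exists tg_one; split; auto; rewrite r1, mul1g; auto).
  assert (WM : forall x y, W x -> W y -> W (x ** y)).
  { intros x y [h [Hh [n [Hn ->]]]] [h' [Hh' [n' [Hn' ->]]]].
    exists (h ** h'). split; auto. exists (tg_inv (rho h') ** n ** rho h' ** n'). split; auto.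
    rewrite hrho; auto. grp. }
  assert (WV : forall x, W x -> W (tg_inv x)).
  { intros x [h [Hh [n [Hn ->]]]]. exists (tg_inv h). split; auto.
    exists (tg_inv (tg_inv (rho h)) ** tg_inv n ** tg_inv (rho h)). split; auto.
    rewrite rinv; auto. grp. }
  assert (oW : tg_open W).
  { apply open_local. intros x [h [Hh [n [Hn ->]]]].
    exists (fun y => N' (tg_inv (rho h) ** y)). split; [apply open_transl; auto|split].
    - rewrite mulKg; auto.
    - intros y Hy. exists h; split; auto. exists (tg_inv (rho h) ** y). split; auto. grp. }
  assert (rW : forall h, H h -> W (rho h)).
  { intros h Hh. exists h; split; auto. exists tg_one; split; auto. grp. }
  assert (WK : forall x, W x -> delta x = tg_one -> x = tg_one).
  { intros x [h [Hh [n [Hn ->]]]] dx.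
    rewrite hdelta, sec in dx; auto. apply inv_uniq in dx.
    destruct (N'P n Hn) as [Nn' On]. rewrite dx in On.
    apply HO in On; [|auto].
    assert (E : tg_inv (rho (tg_inv h)) ** n = tg_one).
    { apply Kinj. apply NM; auto. rewrite hdelta, dinv, sec, dx; auto. apply mulVg. }
    apply inv_uniq in E. rewrite invgK in E. rewrite E, <- hrho, mulgV; auto. }
  assert (Winj : forall x y, W x -> W y -> delta x = delta y -> x = y).
  { intros x y Wx Wy dxy.
    assert (E : tg_inv x ** y = tg_one).
    { apply WK; auto. rewrite hdelta, dinv, dxy. apply mulVg. }
    apply inv_uniq in E. rewrite invgK in E. auto. }
  set (U := fun u => exists x, W x /\ delta x = u).
  set (rho' := fun u => epsilon (inhabits (@tg_one G0)) (fun x => W x /\ delta x = u)).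
  assert (spec : forall u, U u -> W (rho' u) /\ delta (rho' u) = u).
  { intros u Hu. apply (epsilon_spec (inhabits (@tg_one G0)) (fun x => W x /\ delta x = u)). auto. }
  exists U. split; [split; [split; [|split]|]|split].
  - exists tg_one; auto.
  - intros x y [a [Wa <-]] [b [Wb <-]]. exists (a ** b). split; auto.
  - intros x [a [Wa <-]]. exists (tg_inv a). split; auto.
  - apply odelta; auto.
  - intros h Hh. exists (rho h); auto.
  - exists rho'. split; [|split; [|split]].
    + intros u v Hu Hv. destruct (spec u Hu) as [Wu du]. destruct (spec v Hv) as [Wv dv].
      assert (Huv : U (u ** v)).
      { exists (rho' u ** rho' v). split; auto. rewrite hdelta, du, dv; auto. }
      destruct (spec _ Huv) as [Wuv duv].
      apply Winj; auto. rewrite hdelta, du, dv; auto.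
    + intros Wo oWo. exists (fun y => exists x, (W x /\ Wo x) /\ delta x = y).
      split; [apply odelta; apply open_and; auto|].
      intros u Hu. destruct (spec u Hu) as [Wu du]. split.
      * intro H'. exists (rho' u); auto.
      * intros [x [[Wx Wox] dx]]. replace (rho' u) with x; auto.
        apply Winj; auto. congruence.
    + intros h Hh. assert (Uh : U h) by (exists (rho h); auto).
      destruct (spec h Uh) as [? ?]. apply Winj; auto. rewrite sec; auto.
    + intros u Hu. apply spec; auto.
Qed.
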